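(* For all integers $m,n\geq 3$, let $T_{m,n}=C_m\Box C_n$. Then $\chi_i(T_{m,n})=5$ if $m\equiv 0 \pmod 5$ and $n\equiv 0 \pmod 5$, and $\chi_i(T_{m,n})=6$ otherwise.
   Context: For a graph $G$, an incidence is a pair $(v,e)$ with $v\in V(G)$, $e\in E(G)$ and $v$ incident with $e$. Two incidences $(v,e)$ and $(w,f)$ are adjacent if $v=w$, or $e=f$, or the edge $vw$ equals $e$ or $f$. An incidence $k$-coloring of $G$ is a map from the set of incidences of $G$ to a set of $k$ colors such that adjacent incidences receive distinct colors; the incidence chromatic number $\chi_i(G)$ is the least such $k$. $C_n$ denotes the cycle on $n$ vertices and $\Box$ the Cartesian product of graphs: $G\Box H$ has vertex set $V(G)\times V(H)$, with $(u_1,v_1)$ adjacent to $(u_2,v_2)$ iff either $u_1=u_2$ and $v_1v_2\in E(H)$, or $v_1=v_2$ and $u_1u_2\in E(G)$. *)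

(* Defs.v *)
(* Simple graphs on a finType, given by a symmetric
   irreflexive adjacency relation. *)
From mathcomp Require Import all_boot all_order.
Set Implicit Arguments. Unset Strict Implicit. Unset Printing Implicit Defensive.

Section Incidence.
Variable T : finType.
Variable adj : rel T.

Definition edges : {set {set T}} :=
  [set E : {set T} | [exists v, exists w, adj v w && (E == [set v; w])]].

Definition incidences : {set T * {set T}} :=
  [set p : T * {set T} | (p.2 \in edges) && (p.1 \in p.2)].

Definition inc_adj (p q : T * {set T}) : bool :=
  [|| p.1 == q.1, p.2 == q.2, [set p.1; q.1] == p.2 | [set p.1; q.1] == q.2].

Definition incT := {p : T * {set T} | p \in incidences}.

Definition incidence_coloring (k : nat) (c : {ffun incT -> 'I_k}) : bool :=
  [forall p : incT, forall q : incT,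
      ((p != q) && inc_adj (val p) (val q)) ==> (c p != c q)].

Definition incidence_colorable (k : nat) : bool :=
  [exists c : {ffun incT -> 'I_k}, incidence_coloring c].

(* Incidence chromatic number: the least k admitting an incidence k-coloring.
   (k = #|incidences| always works, via an injective colouring, so the
   minimum below is taken over a nonempty range.) *)
Definition incidence_chromatic_number : nat :=
  \big[minn/#|incidences|]_(k < #|incidences|.+1 | incidence_colorable k) (k : nat).
End Incidence.

Definition cycle_rel (n : nat) : rel 'I_n :=
  fun i j => (val j == (val i).+1 %% n) || (val i == (val j).+1 %% n).

Definition box (U V : finType) (G : rel U) (H : rel V) : rel (U * V) :=
  fun x y => ((x.1 == y.1) && H x.2 y.2) || ((x.2 == y.2) && G x.1 y.1).

(* Main.v *)
Require Import Defs.
From mathcomp Require Import all_boot all_order.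
From mathcomp Require Import zify.
Set Implicit Arguments. Unset Strict Implicit. Unset Printing Implicit Defensive.

Section Gen.
Variable T : finType.
Variable adj : rel T.
Hypothesis adj_sym : symmetric adj.
Hypothesis adj_irr : irreflexive adj.

Lemma adj_neq v w : adj v w -> v != w.
Proof. by apply: contraTneq => ->; rewrite adj_irr. Qed.

Lemma edge_mem v w : adj v w -> [set v; w] \in edges adj.
Proof. by move=> h; rewrite inE; apply/existsP; exists v; apply/existsP; exists w; rewrite h eqxx. Qed.

Lemma inc_mem v w : adj v w -> (v, [set v; w]) \in incidences adj.
Proof. by move=> h; rewrite inE /= edge_mem //= set21. Qed.

Lemma incP (p : incT adj) : exists v w, adj v w /\ val p = (v, [set v; w]).
Proof.
case: p => [[v E]] /=; rewrite inE /= => /andP[hE hv].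
move: hE; rewrite inE => /existsP[a /existsP[b /andP[hab /eqP hE]]].
move: hv; rewrite hE => /set2P[->|->].
- by exists a, b.
- by exists b, a; split; [rewrite adj_sym | rewrite setUC].
Qed.

Lemma set2_eqE (a b c d : T) : a != b ->
  ([set a; b] == [set c; d]) = ((a == c) && (b == d)) || ((a == d) && (b == c)).
Proof.
move=> hab; apply/eqP/idP.
- move=> E.
  have ha : a \in [set c; d] by rewrite -E set21.
  have hb : b \in [set c; d] by rewrite -E set22.
  move: hab; case/set2P: ha => ->; case/set2P: hb => ->.
  all: try by move=> hab0; rewrite ?eqxx ?orbT //; move: hab0 => /eqP H; case: (H erefl).
- by case/orP=> /andP[/eqP<- /eqP<-] //; rewrite setUC.
Qed.

Definition other (p : T * {set T}) : T := odflt p.1 [pick w | p.2 == [set p.1; w]].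

Lemma otherE v w : adj v w -> other (v, [set v; w]) = w.
Proof.
move=> h; rewrite /other /=; case: pickP => [w' /= |H]; last by have := H w; rewrite eqxx.
rewrite set2_eqE ?adj_neq // eqxx /=.
case/orP => [/eqP -> //|/andP[/eqP vw /eqP wv]].
by move: (adj_neq h); rewrite wv eqxx.
Qed.

Lemma colorable_of_col k (col : T -> T -> nat) :
  (forall v w, adj v w -> col v w < k.+1) ->
  (forall v w w', adj v w -> adj v w' -> w != w' -> col v w != col v w') ->
  (forall v w x, adj v w -> adj w x -> col v w != col w x) ->
  incidence_colorable adj k.+1.
Proof.
move=> Hb C1 C2; apply/existsP.
exists [ffun p : incT adj => inord (col (val p).1 (other (val p)))].
apply/forallP => p; apply/forallP => q; apply/implyP => /andP[hpq hadj].
rewrite !ffunE.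
have [v [w [hvw ep]]] := incP p; have [v' [w' [hvw' eq]]] := incP q.
rewrite ep eq /= !otherE //.
have neq : (v, [set v; w]) != (v', [set v'; w']) by rewrite -ep -eq.
apply: contra_neq (_ : col v w != col v' w'); first by move=> /(congr1 val); rewrite /= !inordK ?Hb.
move: hadj; rewrite /inc_adj ep eq /=.
case/or4P.
- move/eqP => vv; subst v'.
  apply: C1 => //; apply: contraNneq neq => ->; by [].
- rewrite set2_eqE ?adj_neq //.
  case/orP => /andP[/eqP vv /eqP ww].
  + by subst; move: neq; rewrite eqxx.
  + subst; exact: C2.
- rewrite eq_sym set2_eqE ?adj_neq // eqxx /=.
  case/orP => [/eqP wv|/andP[/eqP wv /eqP vw]].
  + subst; exact: C2.
  + by move: (adj_neq hvw); rewrite vw eqxx.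
- rewrite eq_sym set2_eqE ?adj_neq //.
  case/orP => /andP[/eqP vv /eqP ww].
  + by move: (adj_neq hvw'); rewrite ww eqxx.
  + by move: hvw'; rewrite ww => hvw''; rewrite eq_sym; exact: (C2 _ _ _ hvw'' hvw).
Qed.


Lemma col_of_colorable k : incidence_colorable adj k ->
  exists col : T -> T -> nat,
   [/\ (forall v w, adj v w -> col v w < k),
       (forall v w w', adj v w -> adj v w' -> w != w' -> col v w != col v w') &
       (forall v w x, adj v w -> adj w x -> col v w != col w x)].
Proof.
case/existsP => c /forallP Hc.
pose col v w := if insub (v, [set v; w]) is Some p then val (c p) else 0.
have colE v w (h : adj v w) : col v w = c (Sub (v, [set v; w]) (inc_mem h)).
  by rewrite /col (insubT (mem (incidences adj)) (inc_mem h)).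
exists col; split.
- by move=> v w h; rewrite colE.
- move=> v w w' h h' ww; rewrite !colE.
  set p := Sub _ _; set q := Sub _ _.
  have /forallP /(_ q) /implyP := Hc p; apply.
  rewrite /inc_adj /= eqxx andbT -val_eqE /= xpair_eqE eqxx /=.
  by rewrite set2_eqE ?adj_neq // eqxx /= (negbTE ww) /= (eq_sym w) (negbTE (adj_neq h)) andbF.
- move=> v w x h h'; rewrite !colE.
  set p := Sub _ _; set q := Sub _ _.
  have /forallP /(_ q) /implyP := Hc p; apply.
  rewrite /inc_adj /= eqxx !orbT andbT -val_eqE /= xpair_eqE.
  by rewrite (negbTE (adj_neq h)).
Qed.

Lemma colorable_max : incidence_colorable adj #|incidences adj|.
Proof.
have E : #|{: incT adj}| = #|incidences adj| by rewrite card_sig; apply: eq_card.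
apply/existsP; exists [ffun p => cast_ord E (enum_rank p)].
apply/forallP => p; apply/forallP => q; apply/implyP => /andP[hpq _].
rewrite !ffunE; apply: contra hpq => /eqP /cast_ord_inj /enum_rank_inj ->.
by [].
Qed.

End Gen.

Lemma bigmin_le (I : eqType) (r : seq I) (P : pred I) (F : I -> nat) N x :
  x \in r -> P x -> \big[minn/N]_(i <- r | P i) F i <= F x.
Proof.
elim: r => // y r IH; rewrite inE big_cons => /orP[/eqP<-|/IH h] hx.
- by rewrite hx geq_minl.
- by case: ifP => _; rewrite ?geq_min h ?orbT.
Qed.

Lemma bigmin_eq N (P : pred nat) K : P K -> K <= N -> (forall k, k < K -> ~~ P k) ->
  \big[minn/N]_(k < N.+1 | P k) (k : nat) = K.
Proof.
move=> hP hKN hlt; apply/eqP; rewrite eqn_leq; apply/andP; split.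
- have hK : K < N.+1 by [].
  exact: (@bigmin_le _ _ (fun k : 'I_N.+1 => P k) (fun k : 'I_N.+1 => (k:nat)) N (Ordinal hK) (mem_index_enum _) hP).
- apply: (big_ind (fun x => K <= x)) => //.
  + by move=> x y hx hy; rewrite leq_min hx hy.
  + move=> i hi; rewrite leqNgt; apply/negP => /hlt; by rewrite hi.
Qed.

Section Cyc.
Variable N : nat.
Hypothesis hN : 2 < N.

Lemma ordSE (i : 'I_N) : val (ordS i) = if i.+1 < N then i.+1 else 0.
Proof.
rewrite /=; case: ltnP => h; first by rewrite modn_small.
have -> : i.+1 = N by apply/eqP; rewrite eqn_leq h ltn_ord.
by rewrite modnn.
Qed.

Lemma ord_predE (i : 'I_N) : val (ord_pred i) = if i == 0 :> nat then N.-1 else i.-1.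
Proof.
rewrite /=; case: eqP => h.
- by rewrite h add0n modn_small // prednK // ltnW // ltnW.
- have -> : (i + N).-1 = i.-1 + N by lia.
  by rewrite modnDr modn_small //; have := ltn_ord i; lia.
Qed.

Lemma cycle_relE (i j : 'I_N) : cycle_rel i j = (j == ordS i) || (j == ord_pred i).
Proof.
rewrite /cycle_rel; congr (_ || _).
have -> : (val i == (val j).+1 %% N) = (i == ordS j) by [].
by apply/eqP/eqP => [->|->]; rewrite ?ordSK ?ord_predK.
Qed.

Lemma ordS_neq (i : 'I_N) : ordS i != i.
Proof. rewrite -val_eqE ordSE; have := ltn_ord i; case: (boolP (i.+1 < N)) => /= h; lia. Qed.
Lemma ord_pred_neq (i : 'I_N) : ord_pred i != i.
Proof. rewrite -val_eqE ord_predE; have := ltn_ord i; case: (boolP (i == 0 :> nat)) => /= h; lia. Qed.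
Lemma ordS_pred_neq (i : 'I_N) : ordS i != ord_pred i.
Proof. rewrite -val_eqE ordSE ord_predE; have := ltn_ord i; case: (boolP (i == 0 :> nat)) => /= h; case: (boolP (i.+1 < N)) => /= h'; lia. Qed.

Lemma ordSE' (i : 'I_N) : (ordS i : nat) = if i.+1 < N then i.+1 else 0.
Proof. exact: ordSE. Qed.
Lemma ord_predE' (i : 'I_N) : (ord_pred i : nat) = if i == 0 :> nat then N.-1 else i.-1.
Proof. exact: ord_predE. Qed.
End Cyc.

Section Torus.
Variables m n : nat.
Hypotheses (hm : 2 < m) (hn : 2 < n).
Definition adjT : rel ('I_m * 'I_n) := box (@cycle_rel m) (@cycle_rel n).
Definition nb (v : 'I_m * 'I_n) (d : nat) : 'I_m * 'I_n :=
  match d with 0 => (ordS v.1, v.2) | 1 => (ord_pred v.1, v.2)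
  | 2 => (v.1, ordS v.2) | _ => (v.1, ord_pred v.2) end.

Lemma adjE v w : adjT v w = [|| w == nb v 0, w == nb v 1, w == nb v 2 | w == nb v 3].
Proof.
case: v w => [a b] [c d]; rewrite /adjT /box /= !cycle_relE // !xpair_eqE.
rewrite (eq_sym a c) (eq_sym b d).
by case: (c == a); case: (d == b); case: (c == ordS a); case: (c == ord_pred a);
  case: (d == ordS b); case: (d == ord_pred b).
Qed.

Lemma adjT_sym : symmetric adjT.
Proof. by move=> v w; rewrite /adjT /box /cycle_rel (eq_sym v.1) (eq_sym v.2) (orbC (val w.2 == _)) (orbC (val w.1 == _)). Qed.


Lemma neqF (T : eqType) (x y : T) : x != y -> ((x == y) = false) * ((y == x) = false).
Proof. by move=> h; split; [exact: negbTE | rewrite eq_sym; exact: negbTE]. Qed.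

Lemma adjT_irr : irreflexive adjT.
Proof.
move=> [a b]; rewrite adjE /= !xpair_eqE.
by rewrite !(neqF (ordS_neq hm _), neqF (ord_pred_neq hm _), neqF (ordS_neq hn _), neqF (ord_pred_neq hn _)) !andbF !andFb.
Qed.

Lemma nb_neq v d d' : d < 4 -> d' < 4 -> d != d' -> nb v d != nb v d'.
Proof.
case: v => a b.
have E := (neqF (ordS_neq hm a), neqF (ord_pred_neq hm a), neqF (ordS_pred_neq hm a),
           neqF (ordS_neq hn b), neqF (ord_pred_neq hn b), neqF (ordS_pred_neq hn b)).
by case: d => [|[|[|[|d]]]] //; case: d' => [|[|[|[|d']]]] //= _ _ _; rewrite xpair_eqE ?E ?andbF ?andFb.
Qed.

Definition dir v w : nat :=
  if w == nb v 0 then 0 else if w == nb v 1 then 1 else if w == nb v 2 then 2 else 3.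

Lemma dir_lt v w : dir v w < 4.
Proof. by rewrite /dir; do !case: ifP. Qed.

Lemma nb_dir v w : adjT v w -> nb v (dir v w) = w.
Proof.
rewrite adjE /dir.
by case: eqP => [->//|_]; case: eqP => [->//|_]; case: eqP => [->//|_] /= /eqP ->.
Qed.

Lemma dir_nb v d : d < 4 -> dir v (nb v d) = d.
Proof.
have H d1 d2 : d1 < 4 -> d2 < 4 -> d1 != d2 -> (nb v d1 == nb v d2) = false.
  by move=> *; apply: negbTE; apply: nb_neq.
by rewrite /dir; case: d => [|[|[|[|d]]]] // _; rewrite ?eqxx ?H.
Qed.

Lemma adj_nb v d : d < 4 -> adjT v (nb v d).
Proof. by rewrite adjE; case: d => [|[|[|[|d]]]] //= _; rewrite eqxx ?orbT. Qed.

End Torus.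

Definition cands (m1 m2 m3 m4 : seq nat) : seq (seq nat) :=
  flatten [seq flatten [seq flatten [seq [seq [:: x; y; z; w] | w <- m4] | z <- m3] | y <- m2] | x <- m1].
Definition sdr (m0 m1 m2 m3 m4 : seq nat) : seq nat :=
  head [::] [seq s <- cands m1 m2 m3 m4 | uniq s && all (fun t => t \notin m0) s].
Definition loc_ok k m0 m1 m2 m3 m4 :=
  let s := sdr m0 m1 m2 m3 m4 in
  [&& size s == 4, uniq s, all (fun t => t \notin m0) s, all (fun t => t < k) s,
      nth 0 s 0 \in m1, nth 0 s 1 \in m2, nth 0 s 2 \in m3 & nth 0 s 3 \in m4].

Section Loc.
Variables m n : nat.
Hypotheses (hm : 2 < m) (hn : 2 < n).

Lemma torus_colorable k (M : 'I_m * 'I_n -> seq nat) :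
 (forall v, loc_ok k.+1 (M v) (M (nb v 0)) (M (nb v 1)) (M (nb v 2)) (M (nb v 3))) ->
 incidence_colorable (@adjT m n) k.+1.
Proof.
move=> H.
pose S v := sdr (M v) (M (nb v 0)) (M (nb v 1)) (M (nb v 2)) (M (nb v 3)).
have HS v : [/\ size (S v) = 4, uniq (S v), forall t, t \in S v -> t \notin M v,
   forall t, t \in S v -> t < k.+1 & forall d, d < 4 -> nth 0 (S v) d \in M (nb v d)].
  have := H v; rewrite /loc_ok -/(S v) => /and5P[/eqP h1 h2 /allP h3 /allP h4 /and4P[h5 h6 h7 h8]]; split => //.
  by case => [|[|[|[|d]]]].
apply: (@colorable_of_col _ (@adjT m n) (@adjT_sym m n) (adjT_irr hm hn) k (fun v w => nth 0 (S v) (dir v w))).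
- move=> v w _; have [h1 _ _ h4 _] := HS v; apply: h4; apply: mem_nth; rewrite h1; exact: dir_lt.
- move=> v w w' h h' ww; have [h1 h2 _ _ _] := HS v.
  rewrite nth_uniq ?h1 ?dir_lt //; apply: contra ww => /eqP e.
  by rewrite -(nb_dir h) e nb_dir.
- move=> v w x h h'.
  have [_ _ _ _ h5] := HS v; have [h1 _ h3 _ _] := HS w.
  have A : nth 0 (S v) (dir v w) \in M w by rewrite -{2}(nb_dir h); apply: h5; exact: dir_lt.
  have B : nth 0 (S w) (dir w x) \notin M w by apply: h3; apply: mem_nth; rewrite h1 dir_lt.
  by apply: contraNneq B => <-.
Qed.
End Loc.

Definition E34 : seq (nat * nat) := [:: (0,1); (1,2); (2,0); (0,3); (3,4); (4,5); (5,0)].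
Definition E5 : seq (nat * nat) := [:: (0,1); (1,2); (2,3); (3,4); (4,0)].
Definition TA : seq (seq (seq nat)) := [:: [:: [:: 0; 1]; [:: 0; 2]; [:: 0; 3]; [:: 0; 2]; [:: 0; 5]; [:: 0; 3]]; [:: [:: 1; 4]; [:: 2; 4]; [:: 3; 4]; [:: 2; 3]; [:: 1; 5]; [:: 2; 3]]; [:: [:: 1; 5]; [:: 2; 5]; [:: 3; 5]; [:: 2; 4]; [:: 1; 4]; [:: 3; 4]]; [:: [:: 1; 4]; [:: 2; 4]; [:: 4; 5]; [:: 2; 3]; [:: 0; 1]; [:: 2; 3]]; [:: [:: 3; 5]; [:: 1; 3]; [:: 0; 2]; [:: 1; 5]; [:: 2; 4]; [:: 0; 5]]; [:: [:: 2; 5]; [:: 4; 5]; [:: 1; 5]; [:: 0; 4]; [:: 3; 4]; [:: 1; 4]]].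
Definition TB : seq (seq (seq nat)) := [:: [:: [:: 0; 1]; [:: 0; 2]; [:: 0; 3]; [:: 0; 2]; [:: 1; 4]; [:: 0; 3]]; [:: [:: 0; 4]; [:: 1; 5]; [:: 2; 4]; [:: 0; 5]; [:: 0; 3]; [:: 2; 5]]; [:: [:: 0; 3]; [:: 3; 5]; [:: 1; 2]; [:: 1; 5]; [:: 1; 2]; [:: 1; 4]]; [:: [:: 2; 3]; [:: 3; 4]; [:: 0; 1]; [:: 1; 4]; [:: 0; 3]; [:: 0; 1]]; [:: [:: 0; 5]; [:: 1; 4]; [:: 2; 5]; [:: 3; 4]; [:: 4; 5]; [:: 2; 5]]].
Definition TBt : seq (seq (seq nat)) := [:: [:: [:: 0; 1]; [:: 0; 2]; [:: 0; 3]; [:: 0; 4]; [:: 4; 5]]; [:: [:: 1; 5]; [:: 0; 4]; [:: 3; 5]; [:: 2; 5]; [:: 0; 2]]; [:: [:: 2; 3]; [:: 0; 5]; [:: 1; 2]; [:: 1; 4]; [:: 3; 4]]; [:: [:: 1; 5]; [:: 0; 4]; [:: 0; 5]; [:: 0; 2]; [:: 2; 3]]; [:: [:: 1; 2]; [:: 0; 3]; [:: 1; 4]; [:: 1; 5]; [:: 2; 4]]; [:: [:: 3; 4]; [:: 0; 5]; [:: 1; 2]; [:: 1; 3]; [:: 0; 3]]].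
Definition Mt (Tb : seq (seq (seq nat))) a b := nth [::] (nth [::] Tb a) b.
Definition chk (E1 E2 : seq (nat * nat)) Tb : bool :=
 all (fun ab => all (fun bc => (ab.2 == bc.1) ==> all (fun de => all (fun ef => (de.2 == ef.1) ==>
   loc_ok 6 (Mt Tb ab.2 de.2) (Mt Tb bc.2 de.2) (Mt Tb ab.1 de.2) (Mt Tb ab.2 ef.2) (Mt Tb ab.2 de.1)) E2) E2) E1) E1.

Lemma chkA : chk E34 E34 TA. Proof. by vm_compute. Qed.
Lemma chkB : chk E5 E34 TB. Proof. by vm_compute. Qed.
Lemma chkBt : chk E34 E5 TBt. Proof. by vm_compute. Qed.

Lemma chkP E1 E2 Tb a b c d e f : chk E1 E2 Tb ->
  (a, b) \in E1 -> (b, c) \in E1 -> (d, e) \in E2 -> (e, f) \in E2 ->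
  loc_ok 6 (Mt Tb b e) (Mt Tb c e) (Mt Tb a e) (Mt Tb b f) (Mt Tb b d).
Proof.
move=> /allP H ab bc de ef.
have /allP /(_ _ bc) /implyP /(_ (eqxx _)) /allP /(_ _ de) /allP /(_ _ ef) /implyP := H _ ab.
by apply; rewrite eqxx.
Qed.

Lemma cycle_pred (e : rel nat) s m (hs : size s = m) (hm : 2 < m) (i : 'I_m) :
  cycle e s -> e (nth 0 s (ord_pred i)) (nth 0 s i).
Proof.
case: s hs => [|x s'] hs; first by rewrite -hs in hm.
have {}hs : (size s').+1 = m by []. subst m.
rewrite /cycle => /(pathP 0) H.
have hi := ltn_ord i.
rewrite (ord_predE' hm); case: eqP => [i0|ineq].
- have := H (size s'); rewrite size_rcons ltnSn => /(_ isT).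
  by rewrite -rcons_cons nth_rcons /= ltnSn nth_rcons ltnn eqxx /= i0.
- have hi' : i.-1 < size (rcons s' x) by rewrite size_rcons; lia.
  move: (H _ hi'); rewrite -rcons_cons nth_rcons /=.
  have -> : i.-1 < (size s').+1 by lia.
  rewrite nth_rcons.
  have -> : i.-1 < size s' by lia.
  by case: (nat_of_ord i) ineq => [|k].
Qed.

Lemma cycle_glue (e : rel nat) s1 t1 :
  cycle e (0 :: s1) -> cycle e (0 :: t1) -> cycle e (0 :: s1 ++ 0 :: t1).
Proof.
rewrite /= rcons_cat cat_path /= !rcons_path.
by move=> /andP[-> ->] /andP[-> ->].
Qed.

Definition e34 (a b : nat) := (a, b) \in E34.
Definition e5 (a b : nat) := (a, b) \in E5.

Lemma cyc34 m : 2 < m -> m != 5 -> exists s1, size s1 = m.-1 /\ cycle e34 (0 :: s1).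
Proof.
elim: m {-2}m (leqnn m) => [|M IH] m hmM h2 h5; first by lia.
have c3 : cycle e34 [:: 0; 1; 2] by vm_compute.
have c4 : cycle e34 [:: 0; 3; 4; 5] by vm_compute.
case: (ltnP m 9) => hm9.
- have : m \in [:: 3; 4; 6; 7; 8] by rewrite !inE; lia.
  rewrite !inE => /orP[/eqP->|/orP[/eqP->|/orP[/eqP->|/orP[/eqP->|/eqP->]]]].
  + by exists [:: 1; 2].
  + by exists [:: 3; 4; 5].
  + exists ([:: 1; 2] ++ 0 :: [:: 1; 2]); split => //; exact: cycle_glue.
  + exists ([:: 1; 2] ++ 0 :: [:: 3; 4; 5]); split => //; exact: cycle_glue.
  + exists ([:: 3; 4; 5] ++ 0 :: [:: 3; 4; 5]); split => //; exact: cycle_glue.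
- have [|||s1 [hs1 cs1]] := IH (m - 3); try lia.
  exists (s1 ++ 0 :: [:: 1; 2]); split; last exact: cycle_glue.
  rewrite size_cat hs1 /=; lia.
Qed.

Lemma six_of_words m n (hm : 2 < m) (hn : 2 < n) E1 E2 Tb s t :
  chk E1 E2 Tb -> size s = m -> size t = n ->
  cycle (fun a b => (a, b) \in E1) s -> cycle (fun a b => (a, b) \in E2) t ->
  incidence_colorable (@adjT m n) 6.
Proof.
move=> hc hs ht cs ct.
apply: (torus_colorable hm hn (k:=5) (M := fun v => Mt Tb (nth 0 s v.1) (nth 0 t v.2))) => -[i j] /=.
apply: chkP hc _ _ _ _.
- exact: (cycle_pred hs hm i cs).
- have := cycle_pred hs hm (ordS i) cs; by rewrite ordSK.
- exact: (cycle_pred ht hn j ct).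
- have := cycle_pred ht hn (ordS j) ct; by rewrite ordSK.
Qed.

Lemma modfold M y z : 5 %| M -> ((y %% M) + z) %% 5 = (y + z) %% 5.
Proof. by move=> h; rewrite -modnDml modn_dvdm // modnDml. Qed.
Lemma modfold2 M y z : 5 %| M -> (z + 2 * (y %% M)) %% 5 = (z + 2 * y) %% 5.
Proof. by move=> h; rewrite -modnDmr -modnMmr modn_dvdm // modnMmr modnDmr. Qed.

Lemma loc5 x : x < 5 -> loc_ok 5 [:: x] [:: (x + 1) %% 5] [:: (x + 4) %% 5] [:: (x + 2) %% 5] [:: (x + 3) %% 5].
Proof. by case: x => [|[|[|[|[|x]]]]] // _; vm_compute. Qed.

Lemma five_colorable m n (hm : 2 < m) (hn : 2 < n) :
  5 %| m -> 5 %| n -> incidence_colorable (@adjT m n) 5.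
Proof.
move=> dm dn.
apply: (torus_colorable hm hn (k:=4) (M := fun v => [:: ((v.1 : nat) + 2 * v.2) %% 5])) => -[i j] /=.
rewrite !modfold // !modfold2 //.
case/dvdnP: dm => a ha; case/dvdnP: dn => b hb.
have -> : (i.+1 + 2 * j) %% 5 = ((i + 2 * j) %% 5 + 1) %% 5 by lia.
have -> : ((i + m).-1 + 2 * j) %% 5 = ((i + 2 * j) %% 5 + 4) %% 5.
  lia.
have -> : (i + 2 * j.+1) %% 5 = ((i + 2 * j) %% 5 + 2) %% 5 by lia.
have -> : (i + 2 * (j + n).-1) %% 5 = ((i + 2 * j) %% 5 + 3) %% 5.
  lia.
apply: loc5; lia.
Qed.

Section Pat.
Variables N1 N2 : nat.
Variable g : 'I_N1 -> 'I_N2 -> nat.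
Hypothesis Hr : forall x y, uniq [:: g x y; g (ordS x) y; g (ord_pred x) y; g x (ordS y); g x (ord_pred y)].
Hypothesis Hb : forall x y, g x y < 5.

Local Notation S := ordS.
Local Notation P := ord_pred.

Lemma sp x y k l : k < 5 -> l < 5 -> k != l ->
  nth 0 [:: g x y; g (S x) y; g (P x) y; g x (S y); g x (P y)] k !=
  nth 0 [:: g x y; g (S x) y; g (P x) y; g x (S y); g x (P y)] l.
Proof. by move=> hk hl hkl; rewrite nth_uniq. Qed.

Lemma cover x y a : a < 5 -> a \in [:: g x y; g (S x) y; g (P x) y; g x (S y); g x (P y)].
Proof.
move=> ha; apply/negPn/negP => hn.
have U : uniq (a :: [:: g x y; g (S x) y; g (P x) y; g x (S y); g x (P y)]) by rewrite cons_uniq hn Hr.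
have hsub : {subset a :: [:: g x y; g (S x) y; g (P x) y; g x (S y); g x (P y)] <= iota 0 5}.
  move=> t; rewrite mem_iota /= !inE.
  by case/orP=> [/eqP->//|]; do ![case/orP=> [/eqP->|]]; rewrite ?Hb //; move=> /eqP->; rewrite Hb.
by have := uniq_leq_size U hsub; rewrite size_iota.
Qed.

Ltac kill c1 c2 k l := exfalso; move: (@sp c1 c2 k l isT isT isT); rewrite /= ?ordSK ?ord_predK.

Definition Apat x y := [/\ g (S (S x)) (S y) = g x y, g (S x) (P (P y)) = g x y,
   g (P (P x)) (P y) = g x y & g (P x) (S (S y)) = g x y].
Definition Bpat x y := [/\ g (S x) (S (S y)) = g x y, g (S (S x)) (P y) = g x y,
   g (P x) (P (P y)) = g x y & g (P (P x)) (S y) = g x y].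

Lemma pat x y : Apat x y \/ Bpat x y.
Proof.
have ha := Hb x y.
have Q1 : g (S (S x)) (S y) = g x y \/ g (S x) (S (S y)) = g x y.
  have := cover (S x) (S y) ha; rewrite !inE ?ordSK ?ord_predK.
  case/orP => [/eqP h|]; first by kill (S x) y 3 2; rewrite -h eqxx.
  case/orP => [/eqP h|]; first by left.
  case/orP => [/eqP h|]; first by kill x y 3 0; rewrite -h eqxx.
  case/orP => [/eqP h|]; first by right.
  by move/eqP => h; kill x y 1 0; rewrite -h eqxx.
have Q2 : g (S x) (P (P y)) = g x y \/ g (S (S x)) (P y) = g x y.
  have := cover (S x) (P y) ha; rewrite !inE ?ordSK ?ord_predK.
  case/orP => [/eqP h|]; first by kill (S x) y 4 2; rewrite -h eqxx.
  case/orP => [/eqP h|]; first by right.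
  case/orP => [/eqP h|]; first by kill x y 4 0; rewrite -h eqxx.
  case/orP => [/eqP h|]; first by kill x y 1 0; rewrite -h eqxx.
  by move/eqP => h; left.
have Q3 : g (P (P x)) (P y) = g x y \/ g (P x) (P (P y)) = g x y.
  have := cover (P x) (P y) ha; rewrite !inE ?ordSK ?ord_predK.
  case/orP => [/eqP h|]; first by kill (P x) y 4 1; rewrite -h eqxx.
  case/orP => [/eqP h|]; first by kill x y 4 0; rewrite -h eqxx.
  case/orP => [/eqP h|]; first by left.
  case/orP => [/eqP h|]; first by kill x y 2 0; rewrite -h eqxx.
  by move/eqP => h; right.
have Q4 : g (P x) (S (S y)) = g x y \/ g (P (P x)) (S y) = g x y.
  have := cover (P x) (S y) ha; rewrite !inE ?ordSK ?ord_predK.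
  case/orP => [/eqP h|]; first by kill (P x) y 3 1; rewrite -h eqxx.
  case/orP => [/eqP h|]; first by kill x y 3 0; rewrite -h eqxx.
  case/orP => [/eqP h|]; first by right.
  case/orP => [/eqP h|]; first by left.
  by move/eqP => h; kill x y 2 0; rewrite -h eqxx.
have X2 : g (S (S x)) (S y) = g x y -> g (S (S x)) (P y) = g x y -> False.
  by move=> h1 h2; kill (S (S x)) y 3 4; rewrite h1 h2 eqxx.
have X4 : g (S x) (P (P y)) = g x y -> g (P x) (P (P y)) = g x y -> False.
  by move=> h1 h2; kill x (P (P y)) 1 2; rewrite h1 h2 eqxx.
have X6 : g (P (P x)) (P y) = g x y -> g (P (P x)) (S y) = g x y -> False.
  by move=> h1 h2; kill (P (P x)) y 4 3; rewrite h1 h2 eqxx.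
have X8 : g (P x) (S (S y)) = g x y -> g (S x) (S (S y)) = g x y -> False.
  by move=> h1 h2; kill x (S (S y)) 2 1; rewrite h1 h2 eqxx.
case: Q1 => h1; case: Q2 => h2; case: Q3 => h3; case: Q4 => h4;
  first [by left; split | by right; split | exfalso;
     first [exact: (X2 h1 h2) | exact: (X4 h2 h3) | exact: (X6 h3 h4) | exact: (X8 h4 h1)]].
Qed.

Lemma propA x y : Apat x y ->
  [/\ Apat (S (S x)) (S y), Apat (S x) (P (P y)), Apat (P (P x)) (P y) & Apat (P x) (S (S y))].
Proof.
case=> a1 a2 a3 a4; split.
- case: (pat (S (S x)) (S y)) => // -[b1 b2 b3 b4]; move: b3; rewrite ?ordSK ?ord_predK a1 => b.
  by kill (S x) y 4 2; rewrite b eqxx.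
- case: (pat (S x) (P (P y))) => // -[b1 b2 b3 b4]; move: b4; rewrite ?ordSK ?ord_predK a2 => b.
  by kill (P x) y 4 1; rewrite b eqxx.
- case: (pat (P (P x)) (P y)) => // -[b1 b2 b3 b4]; move: b1; rewrite ?ordSK ?ord_predK a3 => b.
  by kill (P x) y 3 1; rewrite b eqxx.
- case: (pat (P x) (S (S y))) => // -[b1 b2 b3 b4]; move: b2; rewrite ?ordSK ?ord_predK a4 => b.
  by kill (S x) y 3 2; rewrite b eqxx.
Qed.

Lemma stepA x y : Apat x y -> Apat (S (S (S (S (S x))))) y /\ g (S (S (S (S (S x))))) y = g x y.
Proof.
move=> hA; have [hA1 _ _ _] := propA hA; have [hA2 _ _ _] := propA hA1.
have [_ hA3 _ _] := propA hA2; move: hA3; rewrite !ordSK => hA3; split => //.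
case: hA2 => _ e2 _ _; case: hA1 => e1 _ _ _; case: hA => e0 _ _ _.
by move: e2; rewrite !ordSK => ->; rewrite e1 e0.
Qed.

End Pat.

Lemma uniq_swap (a b c d e : nat) : uniq [:: a; b; c; d; e] = uniq [:: a; d; e; b; c].
Proof. apply: perm_uniq; rewrite perm_cons; exact: (permEl (perm_catC [:: b; c] [:: d; e])). Qed.

Section Pat2.
Variables N1 N2 : nat.
Variable g : 'I_N1 -> 'I_N2 -> nat.
Hypothesis Hr : forall x y, uniq [:: g x y; g (ordS x) y; g (ord_pred x) y; g x (ordS y); g x (ord_pred y)].
Hypothesis Hb : forall x y, g x y < 5.

Local Notation S := ordS.
Local Notation P := ord_pred.

Definition gT : 'I_N2 -> 'I_N1 -> nat := fun y x => g x y.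
Lemma HrT y x : uniq [:: gT y x; gT (S y) x; gT (P y) x; gT y (S x); gT y (P x)].
Proof. by rewrite /gT -uniq_swap. Qed.
Lemma HbT y x : gT y x < 5.
Proof. exact: Hb. Qed.

Lemma BA x y : Bpat g x y <-> Apat gT y x.
Proof. by rewrite /Apat /Bpat /gT; split; case=> *; split. Qed.

Lemma propB x y : Bpat g x y ->
  [/\ Bpat g (S x) (S (S y)), Bpat g (S (S x)) (P y), Bpat g (P x) (P (P y)) & Bpat g (P (P x)) (S y)].
Proof.
move/BA => h; have [h1 h2 h3 h4] := @propA _ _ gT HrT HbT y x h.
by split; apply/BA.
Qed.

Lemma stepB x y : Bpat g x y -> Bpat g (S (S (S (S (S x))))) y /\ g (S (S (S (S (S x))))) y = g x y.
Proof.
move=> hB; have [hB1 _ _ _] := propB hB; have [_ hB2 _ _] := propB hB1.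
have [_ hB3 _ _] := propB hB2; move: hB3; rewrite !ordSK => hB3; split => //.
case: hB2 => _ e2 _ _; case: hB1 => _ e1 _ _; case: hB => e0 _ _ _.
by move: e2 e1; rewrite !ordSK => -> ->.
Qed.

Lemma iterAB t x y : Apat g x y \/ Bpat g x y -> g (iter (5 * t) (@ordS N1) x) y = g x y.
Proof.
have HA : forall t, Apat g x y -> Apat g (iter (5 * t) (@ordS N1) x) y /\ g (iter (5 * t) (@ordS N1) x) y = g x y.
  move=> t0 hA; elim: t0 => [|t0 [IH1 IH2]] //.
  rewrite mulnS iterD /=; have [h1 h2] := @stepA _ _ g Hr Hb _ _ IH1; split => //; by rewrite h2.
have HB : forall t, Bpat g x y -> Bpat g (iter (5 * t) (@ordS N1) x) y /\ g (iter (5 * t) (@ordS N1) x) y = g x y.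
  move=> t0 hB; elim: t0 => [|t0 [IH1 IH2]] //.
  rewrite mulnS iterD /=; have [h1 h2] := stepB IH1; split => //; by rewrite h2.
by case=> [/(HA t)|/(HB t)] [].
Qed.

Lemma iterS_val k (x : 'I_N1) : (iter k (@ordS N1) x : nat) = (x + k) %% N1.
Proof.
elim: k => [|k IH]; first by rewrite addn0 modn_small.
by rewrite iterS /= IH -addn1 modnDml addn1 addnS.
Qed.

Lemma div5 (h1 : 0 < N1) (h2 : 0 < N2) : 5 %| N1.
Proof.
apply/negPn/negP => nd.
pose x0 : 'I_N1 := Ordinal h1; pose y0 : 'I_N2 := Ordinal h2.
have [s hs] : exists s, 5 %| (1 + N1 * s).
  move: nd; rewrite /dvdn.
  case hr: (N1 %% 5) => [|[|[|[|[|r]]]]] // _.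
  - by exists 4; lia.
  - by exists 2; lia.
  - by exists 3; lia.
  - by exists 1; lia.
  - have := ltn_pmod N1 (isT : 0 < 5); lia.
have key := iterAB ((1 + N1 * s) %/ 5) (pat Hr Hb x0 y0).
have e : 5 * ((1 + N1 * s) %/ 5) = 1 + N1 * s by rewrite mulnC divnK.
rewrite e in key.
have e2 : iter (1 + N1 * s) (@ordS N1) x0 = S x0.
  apply: ord_inj; rewrite iterS_val /= addnA addnC mulnC modnMDl addn1 //.
rewrite e2 in key.
by move: (@sp _ _ g Hr x0 y0 1 0 isT isT isT); rewrite /= key eqxx.
Qed.

End Pat2.

Lemma pig (a0 a1 a2 a3 x y : nat) : uniq [:: x; a0; a1; a2; a3] -> uniq [:: y; a0; a1; a2; a3] ->
  all (fun t => t < 5) [:: x; y; a0; a1; a2; a3] -> x = y.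
Proof.
move=> ux uy ha; apply/eqP/negPn/negP => nxy.
have U : uniq [:: x; y; a0; a1; a2; a3].
  move: ux uy; rewrite !cons_uniq !inE => /andP[hx _] /andP[hy ->].
  by rewrite andbT negb_or nxy hx.
have hsub : {subset [:: x; y; a0; a1; a2; a3] <= iota 0 5}.
  by move=> t ht; rewrite mem_iota /=; move/allP: ha => /(_ t ht).
by have := uniq_leq_size U hsub; rewrite size_iota.
Qed.

Section Low.
Variables m n : nat.
Hypotheses (hm : 2 < m) (hn : 2 < n).
Variable k : nat.
Variable col : 'I_m * 'I_n -> 'I_m * 'I_n -> nat.
Hypothesis Cb : forall v w, adjT v w -> col v w < k.
Hypothesis C1 : forall v w w', adjT v w -> adjT v w' -> w != w' -> col v w != col v w'.
Hypothesis C2 : forall v w x, adjT v w -> adjT w x -> col v w != col w x.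

Lemma star' w v : adjT w v ->
  uniq [:: col w v; col v (nb v 0); col v (nb v 1); col v (nb v 2); col v (nb v 3)].
Proof.
move=> hw.
have c1 d d' : d < 4 -> d' < 4 -> d != d' -> (col v (nb v d) == col v (nb v d')) = false.
  move=> hd hd' hdd; apply: negbTE; apply: C1; [exact: adj_nb | exact: adj_nb | exact: nb_neq].
have c2 d : d < 4 -> (col w v == col v (nb v d)) = false.
  move=> hd; apply: negbTE; apply: C2 => //; exact: adj_nb.
rewrite !cons_uniq !inE !negb_or.
by rewrite !c2 // !c1.
Qed.

Lemma five_le : 5 <= k.
Proof.
pose i0 : 'I_m := Ordinal (leq_trans (isT : 0 < 3) hm).
pose j0 : 'I_n := Ordinal (leq_trans (isT : 0 < 3) hn).
pose v := (i0, j0).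
have hw : adjT (nb v 0) v by rewrite adjT_sym; exact: adj_nb.
have U := star' hw.
have hsub : {subset [:: col (nb v 0) v; col v (nb v 0); col v (nb v 1); col v (nb v 2); col v (nb v 3)] <= iota 0 k}.
  have A d : d < 4 -> col v (nb v d) < k by move=> hd; apply: Cb; exact: adj_nb.
  move=> t; rewrite mem_iota add0n !inE.
  case/orP=> [/eqP->|]; first exact: Cb.
  by do ![case/orP=> [/eqP->|]]; rewrite ?A //; move/eqP->; rewrite A.
by have := uniq_leq_size U hsub; rewrite size_iota.
Qed.

Hypothesis k5 : k = 5.

Definition fcol (v : 'I_m * 'I_n) := col (nb v 0) v.

Lemma inflow w v : adjT w v -> col w v = fcol v.
Proof.
move=> hw; have hw0 : adjT (nb v 0) v by rewrite adjT_sym; exact: adj_nb.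
apply: (pig (star' hw) (star' hw0)).
have A d : d < 4 -> col v (nb v d) < k by move=> hd; apply: Cb; exact: adj_nb.
rewrite -k5; apply/allP => t; rewrite !inE.
case/orP=> [/eqP->|]; first exact: Cb.
case/orP=> [/eqP->|]; first exact: Cb.
by do ![case/orP=> [/eqP->|]]; rewrite ?A //; move/eqP->; rewrite A.
Qed.

Lemma rainbow x y : uniq [:: fcol (x, y); fcol (ordS x, y); fcol (ord_pred x, y);
   fcol (x, ordS y); fcol (x, ord_pred y)].
Proof.
have hw0 : adjT (nb (x, y) 0) (x, y) by rewrite adjT_sym; exact: adj_nb.
have := star' hw0.
have E d : d < 4 -> col (x, y) (nb (x, y) d) = fcol (nb (x, y) d).
  by move=> hd; apply: inflow; apply: adj_nb.
by rewrite !E.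
Qed.

Lemma fcol_lt v : fcol v < 5.
Proof. by rewrite -k5 /fcol Cb // adjT_sym; exact: adj_nb. Qed.

End Low.

Lemma not5 m n (hm : 2 < m) (hn : 2 < n) :
  incidence_colorable (@adjT m n) 5 -> 5 %| m /\ 5 %| n.
Proof.
move=> /(col_of_colorable (adjT_irr hm hn)) [col [Cb C1 C2]].
pose g x y := fcol col (x, y).
have Hr x y : uniq [:: g x y; g (ordS x) y; g (ord_pred x) y; g x (ordS y); g x (ord_pred y)].
  exact: (rainbow hm hn Cb C1 C2 erefl x y).
have Hb x y : g x y < 5 by exact: (fcol_lt Cb erefl (x, y)).
split.
- exact: (div5 Hr Hb (leq_trans (isT : 0 < 3) hm) (leq_trans (isT : 0 < 3) hn)).
- exact: (div5 (HrT Hr) (HbT Hb) (leq_trans (isT : 0 < 3) hn) (leq_trans (isT : 0 < 3) hm)).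
Qed.

Unset Implicit Arguments.

Theorem theorem1 (m n : nat) (hm : 3 <= m) (hn : 3 <= n) :
  incidence_chromatic_number (box (@cycle_rel m) (@cycle_rel n)) =
  (if (5 %| m) && (5 %| n) then 5 else 6).
Proof.
change (box (@cycle_rel m) (@cycle_rel n)) with (@adjT m n).
have hm' : 2 < m by []. have hn' : 2 < n by [].
have c5 : cycle e5 [:: 0; 1; 2; 3; 4] by vm_compute.
have hcol : incidence_colorable (@adjT m n) (if (5 %| m) && (5 %| n) then 5 else 6).
  case: ifP => [/andP[dm dn]|nd]; first exact: five_colorable.
  case: (eqVneq m 5) => [m5|m5].
  - have n5 : n != 5 by apply: contraFneq nd => ->; rewrite m5.
    have [t [ht ct]] := cyc34 hn' n5.
    by apply: (six_of_words hm' hn' chkB (s := [:: 0; 1; 2; 3; 4]) (t := 0 :: t)) => //; rewrite ?m5 //= ht; lia.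
  case: (eqVneq n 5) => [n5|n5].
  - have [s [hs cs]] := cyc34 hm' m5.
    by apply: (six_of_words hm' hn' chkBt (s := 0 :: s) (t := [:: 0; 1; 2; 3; 4])) => //; rewrite ?n5 //= hs; lia.
  - have [s [hs cs]] := cyc34 hm' m5; have [t [ht ct]] := cyc34 hn' n5.
    by apply: (six_of_words hm' hn' chkA (s := 0 :: s) (t := 0 :: t)) => //=; [rewrite hs | rewrite ht]; lia.
have hlt : forall k, k < (if (5 %| m) && (5 %| n) then 5 else 6) -> ~~ incidence_colorable (@adjT m n) k.
  move=> k hk; apply/negP => hk'.
  have := col_of_colorable (adjT_irr hm' hn') hk' => -[col [Cb C1 C2]].
  have h5 := five_le hm' hn' Cb C1 C2.
  move: hk; case: ifP => [_|nd hk]; first by lia.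
  have k5 : k = 5 by lia.
  by move: nd; rewrite k5 in hk'; have [-> ->] := not5 hm' hn' hk'.
apply: bigmin_eq => //.
rewrite leqNgt; apply/negP => /hlt; by rewrite colorable_max ?adjT_irr.
Qed.
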